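(* Let $p$ be an odd prime, $R=F_p+vF_p$ with $v^2=v$, $\theta=\lambda+v\mu$ ($\lambda,\mu\in F_p$) a unit of $R$, and let $C$ be a $\theta$-constacyclic code of length $n$ over $R$ with generating set in standard form $\{vg_{1-v}(x),(1-v)g_v(x)\}$. Then: (1) $C^\perp=\langle vh_{1-v}^*(x),(1-v)h_v^*(x)\rangle$ and $|C^\perp|=p^{\deg(g_{1-v}(x))+\deg(g_v(x))}$; (2) $C^\perp=\langle vh_{1-v}^*(x)+(1-v)h_v^*(x)\rangle$; (3) $\phi_\theta(C^\perp)\subseteq\langle h_{1-v}^*(x)h_v^*(x)\rangle$.
   Context: A $\theta$-constacyclic code of length $n$ over $R$ is an $R$-submodule of $R^n$ closed under $(c_0,\dots,c_{n-1})\mapsto(\theta c_{n-1},c_0,\dots,c_{n-2})$, identified with an ideal of $R[x]/\langle x^n-\theta\rangle$ via $(c_i)\mapsto\sum c_ix^i$ (and likewise $C^\perp$, a $\theta^{-1}$-constacyclic code, with an ideal of $R[x]/\langle x^n-\theta^{-1}\rangle$); $\langle\cdot\rangle$ denotes the generated ideal. $C^\perp$ is the dual with respect to the standard Euclidean inner product on $R^n$. A set $\{vg_1(x),(1-v)g_2(x)\}$ is a generating set in standard form for $C$ if it generates $C$, each $g_i\in F_p[x]$ is monic or $0$, $g_1\mid x^n-(\lambda+\mu)$ if $g_1\ne0$, and $g_2\mid x^n-\lambda$ if $g_2\ne0$. Let $h_{1-v}(x),h_v(x)\in F_p[x]$ be defined by $g_{1-v}(x)h_{1-v}(x)=x^n-(\lambda+\mu)$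 and $g_v(x)h_v(x)=x^n-\lambda$; for $h\in\{h_{1-v},h_v\}$ put $\widetilde h(x)=x^{\deg h}h(1/x)$ and $h^*(x)=\frac{1}{h(0)}\widetilde h(x)$. The polynomial Gray map $\phi_\theta$ sends $f(x)=r(x)+vq(x)$ ($r,q\in F_p[x]$ of degree $<n$) to $\lambda(\lambda+\mu)q(x)+x^n[-\mu r(x)-(\lambda+\mu)q(x)]\in F_p[x]/\langle x^{2n}-1\rangle$. *)

(* Defs.v *)
From HB Require Import structures.
From mathcomp Require Import all_boot all_order all_algebra.
From mathcomp Require Import ring.
Set Implicit Arguments. Unset Strict Implicit. Unset Printing Implicit Defensive.
Import Order.TTheory GRing.Theory.
Local Open Scope ring_scope.

(* The ring R = F_p + v F_p with v^2 = v.  An element MkRv r q stands for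
   r + v q  (r, q in F_p). *)
Section RvDef.
Variable p : nat.

Record Rv := MkRv { rp : 'F_p ; vp : 'F_p }.

Definition Rv_to (x : Rv) : 'F_p * 'F_p := (rp x, vp x).
Definition Rv_of (x : 'F_p * 'F_p) : Rv := MkRv x.1 x.2.
Lemma Rv_toK : cancel Rv_to Rv_of. Proof. by case. Qed.

HB.instance Definition _ := Equality.copy Rv (can_type Rv_toK).
HB.instance Definition _ := Choice.copy Rv (can_type Rv_toK).
HB.instance Definition _ := Countable.copy Rv (can_type Rv_toK).
HB.instance Definition _ := Finite.copy Rv (can_type Rv_toK).

Definition Rv0 := MkRv 0 0.
Definition Rv1 := MkRv 1 0.
Definition Rvadd (x y : Rv) := MkRv (rp x + rp y) (vp x + vp y).
Definition Rvopp (x : Rv) := MkRv (- rp x) (- vp x).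
(* (r1 + v q1)(r2 + v q2) = r1 r2 + v (r1 q2 + q1 r2 + q1 q2), using v^2 = v *)
Definition Rvmul (x y : Rv) :=
  MkRv (rp x * rp y) (rp x * vp y + vp x * rp y + vp x * vp y).

Lemma Rv_eq (x y : Rv) : rp x = rp y -> vp x = vp y -> x = y.
Proof. by case: x; case: y => ? ? ? ? /= -> ->. Qed.

Lemma RvaddA : associative Rvadd.
Proof. by move=> x y z; apply: Rv_eq; rewrite /= addrA. Qed.
Lemma RvaddC : commutative Rvadd.
Proof. by move=> x y; apply: Rv_eq; rewrite /= addrC. Qed.
Lemma Rvadd0 : left_id Rv0 Rvadd.
Proof. by move=> x; apply: Rv_eq; rewrite /= add0r. Qed.
Lemma RvaddN : left_inverse Rv0 Rvopp Rvadd.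
Proof. by move=> x; apply: Rv_eq; rewrite /= addNr. Qed.

HB.instance Definition _ := GRing.isZmodule.Build Rv RvaddA RvaddC Rvadd0 RvaddN.

Lemma RvmulA : associative Rvmul.
Proof. by move=> x y z; apply: Rv_eq => /=; ring. Qed.
Lemma RvmulC : commutative Rvmul.
Proof. by move=> x y; apply: Rv_eq => /=; ring. Qed.
Lemma Rvmul1 : left_id Rv1 Rvmul.
Proof. by move=> x; apply: Rv_eq => /=; ring. Qed.
Lemma RvmulDl : left_distributive Rvmul Rvadd.
Proof. by move=> x y z; apply: Rv_eq => /=; ring. Qed.
Lemma Rv1_neq0 : Rv1 != Rv0.
Proof. by apply/eqP => -[] /eqP; rewrite oner_eq0. Qed.

HB.instance Definition _ :=
  GRing.Zmodule_isComNzRing.Build Rv RvmulA RvmulC Rvmul1 RvmulDl Rv1_neq0.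

Definition vR : Rv := MkRv 0 1.
Definition embR (a : 'F_p) : Rv := MkRv a 0.

End RvDef.

Arguments vR {p}.

Definition liftR (p : nat) (g : {poly 'F_p}) : {poly Rv p} := map_poly (@embR p) g.

Definition vpoly (R : nzRingType) (n : nat) (c : 'rV[R]_n) : {poly R} :=
  \sum_(i < n) c ord0 i *: 'X^i.

(* P lies in the ideal <S> of R[x]/<f>, where P (of degree < deg f) is viewed
   as a residue class: P = sum_i a_i S_i + q f for some polynomials a_i, q. *)
Definition in_ideal (R : comNzRingType) (f : {poly R}) (S : seq {poly R})
    (P : {poly R}) : Prop :=
  exists (a : nat -> {poly R}) (q : {poly R}),
    P = \sum_(i < size S) a i * S`_i + q * f.

(* theta-constacyclic shift (c_0,...,c_{n-1}) |-> (theta c_{n-1}, c_0, ..., c_{n-2}) *)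
Definition cshift (R : nzRingType) (n : nat) (theta : R) (c : 'rV[R]_n) : 'rV[R]_n :=
  \row_(i < n) ((if val i == 0%N then theta else 1) * c ord0 (ord_pred i)).

Definition constacyclic (p n : nat) (theta : Rv p) (C : {set 'rV[Rv p]_n}) : Prop :=
  [/\ 0 \in C,
      (forall c d, c \in C -> d \in C -> c + d \in C),
      (forall (r : Rv p) c, c \in C -> r *: c \in C) &
      (forall c, c \in C -> cshift theta c \in C)].

Definition dualcode (p n : nat) (C : {set 'rV[Rv p]_n}) : {set 'rV[Rv p]_n} :=
  [set c : 'rV[Rv p]_n | [forall d : 'rV[Rv p]_n,
     (d \in C) ==> (\sum_(i < n) c ord0 i * d ord0 i == 0)]].

Definition recip (F : nzRingType) (h : {poly F}) : {poly F} :=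
  \poly_(i < size h) h`_((size h).-1 - i).

Definition hstar (p : nat) (h : {poly 'F_p}) : {poly 'F_p} := (h`_0)^-1 *: recip h.

Definition gray (p n : nat) (lam mu : 'F_p) (c : 'rV[Rv p]_n) : {poly 'F_p} :=
  let r := \sum_(i < n) rp (c ord0 i) *: 'X^i in
  let q := \sum_(i < n) vp (c ord0 i) *: 'X^i in
  (lam * (lam + mu)) *: q + 'X^n * (- (mu *: r) - (lam + mu) *: q).

(* Main.v *)
Require Import Defs.
From HB Require Import structures.
From mathcomp Require Import all_boot all_order all_algebra.
From mathcomp Require Import ring zify.
Import GRing.Theory.
Local Open Scope ring_scope.
Set Implicit Arguments. Unset Strict Implicit.

Section Rev.
Variable F : fieldType.
Implicit Types P Q A B : {poly F}.

Definition rv (N : nat) P : {poly F} := \poly_(i < N) P`_(N.-1 - i).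

Lemma coef_rv N P i : (rv N P)`_i = if (i < N)%N then P`_(N.-1 - i) else 0.
Proof. by rewrite coef_poly. Qed.

Lemma rvD N P Q : rv N (P + Q) = rv N P + rv N Q.
Proof. by apply/polyP=> i; rewrite coefD !coef_rv coefD; case: ifP; rewrite ?addr0. Qed.
Lemma rvZ N c P : rv N (c *: P) = c *: rv N P.
Proof. by apply/polyP=> i; rewrite coefZ !coef_rv coefZ; case: ifP; rewrite ?mulr0. Qed.
Lemma rv0 N : rv N 0 = 0.
Proof. by apply/polyP=> i; rewrite coef_rv !coef0 if_same. Qed.
Lemma rv_sum N (I : finType) (G : I -> {poly F}) :
  rv N (\sum_i G i) = \sum_i rv N (G i).
Proof. exact: (big_morph (rv N) (rvD N) (rv0 N)). Qed.

Lemma rvXn N j : (j < N)%N -> rv N 'X^j = 'X^(N.-1 - j).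
Proof.
move=> jN; apply/polyP=> i; rewrite coef_rv !coefXn.
case: ltnP => iN.
  by congr (_%:R); apply/eqP; case: eqP; case: eqP => //; lia.
by case: eqP => // ?; lia.
Qed.

Lemma size_rv N P : (size (rv N P) <= N)%N.
Proof. exact: size_poly. Qed.

Lemma rvK N P : (size P <= N)%N -> rv N (rv N P) = P.
Proof.
move=> sP; apply/polyP=> i; rewrite coef_rv; case: ltnP => iN.
  by rewrite coef_rv ifT; [congr (_`_ _); lia | lia].
by rewrite nth_default //; apply: leq_trans sP iN.
Qed.

Lemma poly_sum_le A a : (size A <= a)%N -> A = \sum_(j < a) A`_j *: 'X^j.
Proof.
move=> sA; rewrite -poly_def; apply/polyP=> i; rewrite coef_poly.
by case: ltnP => // ia; rewrite nth_default //; apply: leq_trans sA ia.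
Qed.

Lemma rv_mul A B a b : (size A <= a)%N -> (size B <= b)%N ->
  rv (a + b).-1 (A * B) = rv a A * rv b B.
Proof.
move=> sA sB.
have EA := @poly_sum_le A a sA; have EB := @poly_sum_le B b sB.
rewrite {1}EA {1}EB mulr_suml rv_sum.
rewrite [in rv a A]EA [in rv b B]EB !rv_sum mulr_suml.
apply: eq_bigr => j _; rewrite mulr_sumr rv_sum mulr_sumr.
apply: eq_bigr => k _.
rewrite -scalerAl -scalerAr !rvZ -scalerAl -scalerAr; congr (_ *: (_ *: _)).
have ja := ltn_ord j; have kb := ltn_ord k.
rewrite -exprD !rvXn; [|lia|lia|lia].
by rewrite -exprD; congr (GRing.exp _ _); lia.
Qed.

End Rev.

Section Vec.
Variable F : fieldType.

Lemma rvB N (P Q : {poly F}) : rv N (P - Q) = rv N P - rv N Q.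
Proof. by apply/polyP=> i; rewrite coefB !coef_rv coefB; case: ifP; rewrite ?subr0. Qed.

Lemma size_mul_le2 (P Q : {poly F}) a b :
  (size P <= a)%N -> (size Q <= b)%N -> (size (P * Q)%R <= (a + b).-1)%N.
Proof.
move=> sP sQ; apply: (leq_trans (size_mul_leq P Q)).
by rewrite -!subn1 leq_sub2r // leq_add.
Qed.

Definition dot n (u w : 'rV[F]_n) := \sum_(i < n) u 0 i * w 0 i.
Definition vec_of n (P : {poly F}) : 'rV[F]_n := \row_(i < n) P`_i.

Lemma coef_vpoly n (u : 'rV[F]_n) (i : 'I_n) : (vpoly u)`_i = u 0 i.
Proof.
rewrite /vpoly coef_sum (bigD1 i) //= coefZ coefXn eqxx mulr1 big1 ?addr0 //.
by move=> j ji; rewrite coefZ coefXn eq_sym; case: eqP => [/val_inj /eqP|]; rewrite ?(negbTE ji) ?mulr0.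
Qed.

Lemma vpoly_vec n (P : {poly F}) : (size P <= n)%N -> vpoly (vec_of n P) = P.
Proof.
move=> sP; rewrite [RHS](poly_sum_le sP) /vpoly.
by apply: eq_bigr => i _; rewrite mxE.
Qed.

Lemma size_vpoly n (u : 'rV[F]_n) : (size (vpoly u) <= n)%N.
Proof.
apply/leq_sizeP => j jn; rewrite /vpoly coef_sum big1 // => i _.
rewrite coefZ coefXn; case: eqP => [ji|]; last by rewrite mulr0.
by move: (ltn_ord i); rewrite -ji; case: leqP jn.
Qed.

Lemma vec_vpoly n (u : 'rV[F]_n) : vec_of n (vpoly u) = u.
Proof. by apply/rowP => j; rewrite mxE coef_vpoly. Qed.

Lemma dot_coef n (u w : 'rV[F]_n) : (0 < n)%N ->
  dot u w = (vpoly u * rv n (vpoly w))`_n.-1.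
Proof.
case: n u w => [//|n] u w _ /=; rewrite coefM /dot.
apply: eq_bigr => i _; rewrite coef_rv coef_vpoly ifT; last by have := ltn_ord i; lia.
have -> : (n - (n - i) = i)%N by have := ltn_ord i; lia.
by rewrite coef_vpoly.
Qed.

Lemma rvXnC n (c : F) : (0 < n)%N -> rv n.+1 ('X^n - c%:P) = 1 - c *: 'X^n.
Proof.
move=> n0; apply/polyP=> i; rewrite coef_rv !coefB coefXn coefC coef1 coefZ coefXn.
case: ltnP => iN.
  case: i iN => [|i] iN /=.
    have nn : (n == 0)%N = false by lia.
    have nn' : (0 == n)%N = false by lia.
    by rewrite subn0 eqxx nn nn' mulr0 subr0.
  have -> : (n - i.+1 == n)%N = false by lia.
  case: (eqVneq i.+1 n) => [e|e].
    by rewrite e subnn eqxx mulr1.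
  have -> : (n - i.+1 == 0)%N = false by lia.
  by rewrite mulr0 !subr0.
have -> : (i == 0)%N = false by lia.
have -> : (i == n)%N = false by lia.
by rewrite mulr0 subr0.
Qed.

Lemma factGH n (g h : {poly F}) (c : F) : (0 < n)%N -> c != 0 -> g * h = 'X^n - c%:P ->
  exists d m, [/\ size g = d.+1, size h = m.+1, (d + m = n)%N, h`_0 != 0 &
    rv (size g) g * rv (size h) h = 1 - c *: 'X^n].
Proof.
move=> n0 c0 E.
have nz : g * h != 0 by rewrite E -size_poly_eq0 size_XnsubC.
have g0 : g != 0 by apply: contraNneq nz => ->; rewrite mul0r.
have h0 : h != 0 by apply: contraNneq nz => ->; rewrite mulr0.
have ss := size_mul g0 h0; rewrite E size_XnsubC // in ss.
move: g0 h0; rewrite -!size_poly_eq0.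
case sg: (size g) => [//|d]; case sh: (size h) => [//|m] _ _.
exists d, m; split => //.
- by rewrite sg sh /= addnS in ss; case: ss.
- have := coef0M g h; rewrite E coefB coefXn coefC /=.
  have -> : (0 == n)%N = false by lia.
  by rewrite sub0r => e; apply: contra_neq c0 => h00; rewrite -[c]opprK e h00 mulr0 oppr0.
- rewrite -(@rv_mul F g h d.+1 m.+1) ?sg ?sh //.
  by rewrite sg sh in ss; rewrite -ss E rvXnC.
Qed.

Lemma dual_char n (g h : {poly F}) (c : F) (u : 'rV[F]_n) :
  (0 < n)%N -> c != 0 -> g * h = 'X^n - c%:P ->
  (forall w : 'rV[F]_n, g %| vpoly w -> dot u w = 0) <-> rv (size h) h %| vpoly u.
Proof.
move=> n0 c0 E; have [d [m [sg sh dm h00 GH]]] := factGH n0 c0 E.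
set gh := rv (size g) g in GH *; set hh := rv (size h) h in GH *.
have shh : size hh = m.+1.
  by rewrite /hh size_poly_eq sh //= subnn.
have hh0 : hh != 0 by rewrite -size_poly_eq0 shh.
have rvkg (k : {poly F}) : (size k <= m)%N -> rv n (k * g) = rv m k * gh.
  move=> sk; rewrite -rv_mul ?sg //; congr rv; lia.
split.
- move=> H.
  set U := vpoly u.
  have HT i : (d <= i < n)%N -> (U * gh)`_i = 0.
    case/andP => di iN.
    pose j := (i - d)%N.
    have jm : (j < m)%N by rewrite /j; lia.
    have sX : (size ('X^j * g)%R <= n)%N.
      apply: leq_trans (size_mul_le2 (a := j.+1) (b := d.+1) _ _) _.
      - by rewrite size_polyXn.
      - by rewrite sg.
      by lia.
    have := H (vec_of n ('X^j * g)); rewrite vpoly_vec // dvdp_mulIr => /(_ isT).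
    rewrite dot_coef // vpoly_vec // rvkg ?size_polyXn // rvXn // -/U mulrCA coefXnM ifF; last by lia.
    by have -> : (n.-1 - (m.-1 - j) = i)%N by rewrite /j; lia.
  set R := take_poly n (U * gh).
  have sR : (size R <= d)%N.
    apply/leq_sizeP => i di; rewrite coef_take_poly; case: ltnP => iN //.
    by apply: HT; rewrite di iN.
  have EU : U = R * hh.
    have TD := poly_take_drop n (U * gh).
    have sU : (size U <= n)%N by apply: size_vpoly.
    apply/polyP => i; case: (ltnP i n) => iN.
      have : ((U * gh) * hh)`_i = U`_i.
        by rewrite -mulrA GH mulrBr mulr1 -scalerAr coefB coefZ coefMXn iN mulr0 subr0.
      by rewrite -TD mulrDl coefD mulrAC coefMXn iN addr0 => ->.
    rewrite (nth_default _ (leq_trans sU iN)) nth_default //.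
    apply: leq_trans (size_mul_le2 sR (_ : (size hh <= m.+1)%N)) _; first by rewrite shh.
    by lia.
  by rewrite EU dvdp_mulIr.
- case/dvdpP => K HK w /dvdpP [k Hk].
  have sK : (size K <= d)%N.
    have := size_vpoly u; rewrite HK.
    have [->|K0] := eqVneq K 0; first by rewrite size_poly0.
    by rewrite size_mul // shh addnS /= -dm leq_add2r.
  have sk : (size k <= m)%N.
    have := size_vpoly w; rewrite Hk.
    have [->|k0] := eqVneq k 0; first by rewrite size_poly0.
    have g0 : g != 0 by rewrite -size_poly_eq0 sg.
    by rewrite size_mul // sg addnS /= -dm [(d + m)%N]addnC leq_add2r.
  rewrite dot_coef // Hk rvkg // HK.
  have -> : K * hh * (rv m k * gh) = (K * rv m k) * (gh * hh) by ring.
  rewrite GH mulrBr mulr1 coefB -scalerAr coefZ coefMXn ifT; last by lia.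
  rewrite mulr0 subr0 nth_default //.
  apply: leq_trans (size_mul_le2 sK (size_rv m k)) _; by lia.
Qed.

End Vec.

Lemma natfact1 a b n : (0 < b)%N -> ((a + b).-1 <= n)%N -> (a <= n.+1 - b)%N.
Proof. lia. Qed.

Section Count.
Variable F : finFieldType.

Lemma card_div n (k : {poly F}) : k != 0 -> (size k <= n.+1)%N ->
  #|[set u : 'rV[F]_n | k %| vpoly u]| = (#|F| ^ (n.+1 - size k))%N.
Proof.
move=> k0 sk; set e := (n.+1 - size k)%N.
have sk1 : (0 < size k)%N by rewrite size_poly_gt0.
have szb (b : 'rV[F]_e) : (size (vpoly b * k)%R <= n)%N.
  apply: leq_trans (size_mul_le2 (size_vpoly b) (leqnn (size k))) _.
  by rewrite /e; lia.
pose phi (b : 'rV[F]_e) : 'rV[F]_n := vec_of n (vpoly b * k).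
have vphi b : vpoly (phi b) = vpoly b * k by rewrite vpoly_vec.
have phi_inj : injective phi.
  move=> b b' E; have := congr1 (@vpoly _ _) E; rewrite !vphi => /(mulIf k0) E'.
  by rewrite -(vec_vpoly b) -(vec_vpoly b') E'.
have -> : [set u : 'rV[F]_n | k %| vpoly u] = phi @: setT.
  apply/setP => u; rewrite inE; apply/idP/imsetP.
  - case/dvdpP => q Hq.
    have sq : (size q <= e)%N.
      have := size_vpoly u; rewrite Hq.
      have [->|q0] := eqVneq q 0; first by rewrite size_poly0.
      by rewrite size_mul //; apply: natfact1.
    exists (vec_of e q); first by rewrite in_setT.
    by rewrite /phi vpoly_vec // -Hq vec_vpoly.
  - by case=> b _ ->; rewrite vphi dvdp_mulIr.
by rewrite card_imset // cardsT card_mx mul1n.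
Qed.

End Count.

Section RL.
Variable p : nat.
Local Notation R := (Rv p).
Local Notation F := ('F_p).

Lemma rpD (x y : R) : rp (x + y) = rp x + rp y. Proof. by []. Qed.
Lemma vpD (x y : R) : vp (x + y) = vp x + vp y. Proof. by []. Qed.
Lemma rpN (x : R) : rp (- x) = - rp x. Proof. by []. Qed.
Lemma vpN (x : R) : vp (- x) = - vp x. Proof. by []. Qed.
Lemma rpM (x y : R) : rp (x * y) = rp x * rp y. Proof. by []. Qed.
Lemma vpM (x y : R) : vp (x * y) = rp x * vp y + vp x * rp y + vp x * vp y. Proof. by []. Qed.
Lemma rp1 : rp (1 : R) = 1. Proof. by []. Qed.
Lemma vp1 : vp (1 : R) = 0. Proof. by []. Qed.
Lemma rp0 : rp (0 : R) = 0. Proof. by []. Qed.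
Lemma vp0 : vp (0 : R) = 0. Proof. by []. Qed.

Definition pi0 (x : R) : F := rp x.
Definition pi1 (x : R) : F := rp x + vp x.

Lemma pi0_is_zmod : zmod_morphism pi0.
Proof. by move=> x y; rewrite /pi0 rpD rpN. Qed.
Lemma pi0_is_mon : monoid_morphism pi0.
Proof. by split => [|x y]; rewrite /pi0 ?rpM. Qed.
HB.instance Definition _ := GRing.isZmodMorphism.Build R F pi0 pi0_is_zmod.
HB.instance Definition _ := GRing.isMonoidMorphism.Build R F pi0 pi0_is_mon.

Lemma pi1_is_zmod : zmod_morphism pi1.
Proof. by move=> x y; rewrite /pi1 rpD rpN vpD vpN; ring. Qed.
Lemma pi1_is_mon : monoid_morphism pi1.
Proof. by split => [|x y]; rewrite /pi1 ?rp1 ?vp1 ?addr0 // rpM vpM; ring. Qed.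
HB.instance Definition _ := GRing.isZmodMorphism.Build R F pi1 pi1_is_zmod.
HB.instance Definition _ := GRing.isMonoidMorphism.Build R F pi1 pi1_is_mon.

Lemma embR_is_zmod : zmod_morphism (@embR p).
Proof. by move=> x y; apply: Rv_eq; rewrite /= ?rpD ?vpD ?rpN ?vpN //= subrr. Qed.
Lemma embR_is_mon : monoid_morphism (@embR p).
Proof. by split => [|x y] //; apply: Rv_eq; rewrite ?rpM ?vpM /=; ring. Qed.
HB.instance Definition _ := GRing.isZmodMorphism.Build F R (@embR p) embR_is_zmod.
HB.instance Definition _ := GRing.isMonoidMorphism.Build F R (@embR p) embR_is_mon.

Lemma Rv_split (x : R) : x = vR * embR (pi1 x) + (1 - vR) * embR (pi0 x).
Proof.
apply: Rv_eq; rewrite ?rpD ?vpD ?rpM ?vpM ?rpD ?vpD ?rpN ?vpN /= /pi1 /pi0; ring.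
Qed.


Lemma pi1v : pi1 (vR : R) = 1. Proof. by rewrite /pi1 /= add0r. Qed.
Lemma pi0v : pi0 (vR : R) = 0. Proof. by []. Qed.
Lemma pi11v : pi1 (1 - vR : R) = 0. Proof. by rewrite /pi1 rpD vpD rpN vpN rp1 vp1 /=; ring. Qed.
Lemma pi01v : pi0 (1 - vR : R) = 1. Proof. by rewrite /pi0 rpD rpN rp1 /= subr0. Qed.
Lemma vRvR : (vR : R) * vR = vR. Proof. by apply: Rv_eq; rewrite ?rpM ?vpM /=; ring. Qed.

Lemma map_lift1 (H : {poly F}) : map_poly pi1 (liftR H) = H.
Proof. by apply/polyP => i; rewrite !coef_map /= /pi1 /= addr0. Qed.
Lemma map_lift0 (H : {poly F}) : map_poly pi0 (liftR H) = H.
Proof. by apply/polyP => i; rewrite !coef_map. Qed.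

Lemma poly_split (P : {poly R}) :
  P = vR%:P * liftR (map_poly pi1 P) + (1 - vR)%:P * liftR (map_poly pi0 P).
Proof. by apply/polyP => i; rewrite coefD !coefCM /liftR !coef_map /=; apply: Rv_split. Qed.

Lemma sum2 (T : comNzRingType) (a : nat -> T) (x y : T) :
  \sum_(i < size [:: x; y]) a i * [:: x; y]`_i = a 0%N * x + a 1%N * y.
Proof. by rewrite !big_ord_recl big_ord0 /= addr0. Qed.
Lemma sum2' (T : comNzRingType) (a : nat -> T) (x y : T) :
  \sum_(i < 2) a i * [:: x; y]`_i = a 0%N * x + a 1%N * y.
Proof. by rewrite !big_ord_recl big_ord0 /= addr0. Qed.
Lemma sum1' (T : comNzRingType) (a : nat -> T) (x : T) :
  \sum_(i < 1) a i * [:: x]`_i = a 0%N * x.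
Proof. by rewrite !big_ord_recl big_ord0 /= addr0. Qed.
Lemma sum1 (T : comNzRingType) (a : nat -> T) (x : T) :
  \sum_(i < size [:: x]) a i * [:: x]`_i = a 0%N * x.
Proof. by rewrite !big_ord_recl big_ord0 /= addr0. Qed.

Lemma mv1 (H : {poly F}) : map_poly pi1 (vR%:P * liftR H) = H.
Proof. by apply/polyP => i; rewrite coef_map coefCM /liftR coef_map /= /pi1 ?rpM ?vpM /=; ring. Qed.
Lemma mv11 (H : {poly F}) : map_poly pi1 ((1 - vR)%:P * liftR H) = 0.
Proof.
apply/polyP => i; rewrite coef_map coefCM /liftR coef_map coef0 /= /pi1 ?rpM ?vpM.
by rewrite ?rpD ?vpD ?rpN ?vpN ?rp1 ?vp1 /=; ring.
Qed.
Lemma mv0 (H : {poly F}) : map_poly pi0 (vR%:P * liftR H) = 0.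
Proof. by apply/polyP => i; rewrite coef_map coefCM /liftR coef_map coef0 /= /pi0 ?rpM /=; ring. Qed.
Lemma mv01 (H : {poly F}) : map_poly pi0 ((1 - vR)%:P * liftR H) = H.
Proof.
apply/polyP => i; rewrite coef_map coefCM /liftR coef_map /= /pi0 ?rpM.
by rewrite ?rpD ?rpN ?rp1 /=; ring.
Qed.
Lemma mXt1 n (t : R) : map_poly pi1 ('X^n - t%:P) = 'X^n - (pi1 t)%:P.
Proof. by rewrite rmorphB /= map_polyXn map_polyC. Qed.
Lemma mXt0 n (t : R) : map_poly pi0 ('X^n - t%:P) = 'X^n - (pi0 t)%:P.
Proof. by rewrite rmorphB /= map_polyXn map_polyC. Qed.

Lemma mD1 (A B : {poly R}) : map_poly pi1 (A + B) = map_poly pi1 A + map_poly pi1 B.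
Proof. exact: rmorphD. Qed.
Lemma mD0 (A B : {poly R}) : map_poly pi0 (A + B) = map_poly pi0 A + map_poly pi0 B.
Proof. exact: rmorphD. Qed.

Lemma mM1 (A : {poly R}) (H : {poly F}) : map_poly pi1 (A * (vR%:P * liftR H)) = map_poly pi1 A * H.
Proof. by rewrite rmorphM /= mv1. Qed.
Lemma mM11 (w : R) (A : {poly R}) (H : {poly F}) : w = 1 - vR -> map_poly pi1 (A * (w%:P * liftR H)) = 0.
Proof. by move=> ->; rewrite rmorphM /= mv11 mulr0. Qed.
Lemma mM0 (A : {poly R}) (H : {poly F}) : map_poly pi0 (A * (vR%:P * liftR H)) = 0.
Proof. by rewrite rmorphM /= mv0 mulr0. Qed.
Lemma mM01 (w : R) (A : {poly R}) (H : {poly F}) : w = 1 - vR -> map_poly pi0 (A * (w%:P * liftR H)) = map_poly pi0 A * H.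
Proof. by move=> ->; rewrite rmorphM /= mv01. Qed.
Lemma mMf1 n (A : {poly R}) t : map_poly pi1 (A * ('X^n - t%:P)) = map_poly pi1 A * ('X^n - (pi1 t)%:P).
Proof. by rewrite rmorphM /= mXt1. Qed.
Lemma mMf0 n (A : {poly R}) t : map_poly pi0 (A * ('X^n - t%:P)) = map_poly pi0 A * ('X^n - (pi0 t)%:P).
Proof. by rewrite rmorphM /= mXt0. Qed.
Lemma mMs1 (A : {poly R}) (H1 H0 : {poly F}) :
  map_poly pi1 (A * (vR%:P * liftR H1 + (1 - vR)%:P * liftR H0)) = map_poly pi1 A * H1.
Proof. by rewrite mulrDr rmorphD /= mM1 (mM11 (w := 1 - vR)) // addr0. Qed.
Lemma mMs0 (A : {poly R}) (H1 H0 : {poly F}) :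
  map_poly pi0 (A * (vR%:P * liftR H1 + (1 - vR)%:P * liftR H0)) = map_poly pi0 A * H0.
Proof. by rewrite mulrDr rmorphD /= mM0 (mM01 (w := 1 - vR)) // add0r. Qed.

Lemma idealA n (t : R) (H1 H0 : {poly F}) (P : {poly R}) :
  H1 %| 'X^n - (pi1 t)%:P -> H0 %| 'X^n - (pi0 t)%:P ->
  in_ideal ('X^n - t%:P) [:: vR%:P * liftR H1; (1 - vR)%:P * liftR H0] P
   <-> (H1 %| map_poly pi1 P) /\ (H0 %| map_poly pi0 P).
Proof.
move=> D1 D0; split.
- case=> a [q ->]; rewrite ?sum2.
  rewrite !mD1 !mD0.
  rewrite mM1 (mM11 (w := 1 - vR)) // mM0 (mM01 (w := 1 - vR)) // mMf1 mMf0 addr0 add0r.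
  by split; apply: dvdp_add; rewrite ?dvdp_mulIr //; apply: dvdp_mull.
- case=> /dvdpP [k1 Hk1] /dvdpP [k0 Hk0].
  exists (fun i => if i == 0%N then liftR k1 else liftR k0), 0.
  rewrite ?sum2 ?sum2' mul0r !addr0 /=.
  rewrite {1}(poly_split P) Hk1 Hk0 /liftR !rmorphM /=; rewrite !big_ord_recl big_ord0 /=; ring.
Qed.

Lemma idealA1 n (t : R) (H1 H0 : {poly F}) (P : {poly R}) :
  H1 %| 'X^n - (pi1 t)%:P -> H0 %| 'X^n - (pi0 t)%:P ->
  in_ideal ('X^n - t%:P) [:: vR%:P * liftR H1 + (1 - vR)%:P * liftR H0] P
   <-> (H1 %| map_poly pi1 P) /\ (H0 %| map_poly pi0 P).
Proof.
move=> D1 D0; split.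
- case=> a [q ->]; rewrite ?sum1.
  rewrite !mD1 !mD0 mMs1 mMs0 mMf1 mMf0.
  by split; apply: dvdp_add; rewrite ?dvdp_mulIr //; apply: dvdp_mull.
- case=> /dvdpP [k1 Hk1] /dvdpP [k0 Hk0].
  exists (fun _ => vR%:P * liftR k1 + (1 - vR)%:P * liftR k0), 0.
  rewrite !big_ord_recl big_ord0 /= mul0r !addr0.
  rewrite {1}(poly_split P) Hk1 Hk0 /liftR !rmorphM /=.
  have ee : (vR : R)%:P * vR%:P = vR%:P by rewrite -polyCM vRvR.
  rewrite polyCB polyC1.
  set e := (vR : R)%:P in ee *.
  set a := map_poly (@embR p) k1; set b := map_poly (@embR p) k0.
  set c := map_poly (@embR p) H1; set d := map_poly (@embR p) H0.
  have -> : (e * a + (1 - e) * b) * (e * c + (1 - e) * d) =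
    e * (a * c) + (1 - e) * (b * d) + (e * e - e) * (a * c - a * d - b * c + b * d) by ring.
  by rewrite ee subrr mul0r addr0.
Qed.


Lemma mvp1 n (c : 'rV[R]_n) : map_poly pi1 (vpoly c) = vpoly (map_mx pi1 c).
Proof.
rewrite /vpoly rmorph_sum /=; apply: eq_bigr => i _.
by rewrite map_polyZ map_polyXn mxE.
Qed.
Lemma mvp0 n (c : 'rV[R]_n) : map_poly pi0 (vpoly c) = vpoly (map_mx pi0 c).
Proof.
rewrite /vpoly rmorph_sum /=; apply: eq_bigr => i _.
by rewrite map_polyZ map_polyXn mxE.
Qed.
Lemma pidot1 n (c d : 'rV[R]_n) :
  pi1 (\sum_(i < n) c 0 i * d 0 i) = dot (map_mx pi1 c) (map_mx pi1 d).
Proof. by rewrite rmorph_sum /=; apply: eq_bigr => i _; rewrite rmorphM !mxE. Qed.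
Lemma pidot0 n (c d : 'rV[R]_n) :
  pi0 (\sum_(i < n) c 0 i * d 0 i) = dot (map_mx pi0 c) (map_mx pi0 d).
Proof. by rewrite rmorph_sum /=; apply: eq_bigr => i _; rewrite !mxE. Qed.
Lemma zero_iff (x : R) : x = 0 <-> pi0 x = 0 /\ pi1 x = 0.
Proof.
split => [->|[h0 h1]]; first by rewrite !rmorph0.
apply: Rv_eq => //; move: h1; rewrite /pi1 -/(pi0 x) h0 add0r //.
Qed.
Lemma vpoly0 n : vpoly (0 : 'rV[F]_n) = 0.
Proof. by rewrite /vpoly big1 // => i _; rewrite mxE scale0r. Qed.

End RL.

Lemma gray_aux (F : fieldType) n (M H K : {poly F}) (z : F) : z != 0 ->
  H * K = 'X^n - (z^-1)%:P ->
  exists a q : {poly F}, M * ('X^n - z%:P) = a * (M * H) + q * ('X^(2 * n) - 1).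
Proof.
move=> z0 HK.
have X2 : 'X^(2 * n) = 'X^n * 'X^n :> {poly F} by rewrite mul2n -addnn exprD.
set y := z^-1 in HK.
have [zz|zz] := eqVneq (z * z) 1.
  have yz : y = z by rewrite /y -[z^-1]mul1r -zz mulrK // unitfE.
  exists K, 0; rewrite mul0r addr0 -yz -HK; ring.
have e0 : y * y - 1 != 0.
  rewrite subr_eq0; apply: contra_neq zz => yy.
  by rewrite -[z * z]invrK invfM -/y yy invr1.
exists (- ((y * y - 1)^-1)%:P * ('X^n - z%:P) * K * ('X^n + y%:P)).
exists (((y * y - 1)^-1)%:P * M * ('X^n - z%:P)).
have -> : - ((y * y - 1)^-1)%:P * ('X^n - z%:P) * K * ('X^n + y%:P) * (M * H) =
  - ((y * y - 1)^-1)%:P * ('X^n - z%:P) * ('X^n + y%:P) * M * (H * K) by ring.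
rewrite HK X2.
have -> : forall (E T Y Z : {poly F}),
  - E * (T - Z) * (T + Y) * M * (T - Y) + E * M * (T - Z) * (T * T - 1) =
  M * (T - Z) * (E * (Y * Y - 1)) by move=> *; ring.
by rewrite -!polyCM -polyC1 -polyCB -polyCM mulVf // polyC1 mulr1.
Qed.

Lemma hstar_props p n (g h : {poly 'F_p}) (c : 'F_p) : (0 < n)%N -> c != 0 ->
  g * h = 'X^n - c%:P ->
  [/\ hstar h != 0, size (hstar h) = size h, (n.+1 - size h = (size g).-1)%N,
      hstar h %| 'X^n - (c^-1)%:P &
      forall P, (hstar h %| P) = (rv (size h) h %| P)].
Proof.
move=> n0 c0 E; have [d [m [sg sh dm h00 GH]]] := factGH n0 c0 E.
have i0 : (h`_0)^-1 != 0 by rewrite invr_eq0.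
have shh : size (rv (size h) h) = size h by rewrite size_poly_eq // subnn.
have hs : hstar h = (h`_0)^-1 *: rv (size h) h by [].
have dv P : (hstar h %| P) = (rv (size h) h %| P) by rewrite hs dvdpZl.
have sz : size (hstar h) = size h by rewrite hs size_scale.
split => //.
- by rewrite -size_poly_eq0 sz sh.
- by rewrite sg sh /=; lia.
rewrite dv.
have -> : 'X^n - (c^-1)%:P = (- c^-1) *: (1 - c *: 'X^n).
  rewrite -!mul_polyC.
  have cc : (c^-1)%:P * c%:P = 1 :> {poly 'F_p} by rewrite -polyCM mulVf.
  rewrite polyCN mulrBr mulr1 mulrA mulNr cc; ring.
by rewrite dvdpZr ?oppr_eq0 ?invr_eq0 // -GH dvdp_mulIr.
Qed.

Lemma size_h_le (F : fieldType) n (g h : {poly F}) (c : F) : (0 < n)%N -> c != 0 ->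
  g * h = 'X^n - c%:P -> (size h <= n.+1)%N.
Proof.
move=> n0 c0 E; have [d [m [sg sh dm _ _]]] := factGH n0 c0 E.
by rewrite sh; lia.
Qed.

Unset Implicit Arguments. Set Strict Implicit.

Theorem theorem3p16 (p : nat) (n : nat) (lam mu : 'F_p) (thetainv : Rv p)
    (C : {set 'rV[Rv p]_n}) (g1 g2 h1 h2 : {poly 'F_p}) :
  prime p -> odd p -> (0 < n)%N ->
  MkRv lam mu * thetainv = 1 ->
  constacyclic (MkRv lam mu) C ->
  (forall c, c \in C <->
     in_ideal ('X^n - (MkRv lam mu)%:P)
       [:: vR%:P * liftR g1; (1 - vR)%:P * liftR g2] (vpoly c)) ->
  (g1 \is monic \/ g1 = 0) -> (g2 \is monic \/ g2 = 0) ->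
  (g1 != 0 -> g1 %| 'X^n - (lam + mu)%:P) ->
  (g2 != 0 -> g2 %| 'X^n - lam%:P) ->
  g1 * h1 = 'X^n - (lam + mu)%:P ->
  g2 * h2 = 'X^n - lam%:P ->
  [/\ (forall c, c \in dualcode C <->
         in_ideal ('X^n - thetainv%:P)
           [:: vR%:P * liftR (hstar h1); (1 - vR)%:P * liftR (hstar h2)] (vpoly c))
      /\ #|dualcode C| = (p ^ ((size g1).-1 + (size g2).-1))%N,
      (forall c, c \in dualcode C <->
         in_ideal ('X^n - thetainv%:P)
           [:: vR%:P * liftR (hstar h1) + (1 - vR)%:P * liftR (hstar h2)] (vpoly c)) &
      (forall c, c \in dualcode C ->
         in_ideal ('X^(2 * n) - 1) [:: hstar h1 * hstar h2] (gray lam mu c))].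
Proof.
move=> pr _ n0 Hinv _ HC _ _ _ _ E1 E2.
set th := MkRv lam mu in Hinv HC.
have pi1th : pi1 th = lam + mu by [].
have pi0th : pi0 th = lam by [].
have I1 : (lam + mu) * pi1 thetainv = 1.
  by have := congr1 (@pi1 p) Hinv; rewrite rmorphM rmorph1.
have I0 : lam * pi0 thetainv = 1.
  by have := congr1 (@pi0 p) Hinv; rewrite rmorphM rmorph1.
have c1 : lam + mu != 0.
  by apply/eqP => e; move: I1; rewrite e mul0r => /eqP; rewrite eq_sym oner_eq0.
have c0 : lam != 0.
  by apply/eqP => e; move: I0; rewrite e mul0r => /eqP; rewrite eq_sym oner_eq0.
have pi1ti : pi1 thetainv = (lam + mu)^-1.
  by rewrite -[pi1 thetainv]mul1r -(mulVf c1) -mulrA I1 mulr1.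
have pi0ti : pi0 thetainv = lam^-1.
  by rewrite -[pi0 thetainv]mul1r -(mulVf c0) -mulrA I0 mulr1.
have dg1 : g1 %| 'X^n - (pi1 th)%:P by rewrite pi1th -E1 dvdp_mulIl.
have dg2 : g2 %| 'X^n - (pi0 th)%:P by rewrite pi0th -E2 dvdp_mulIl.
have [hn1 hs1 hd1 hdv1 hr1] := hstar_props n0 c1 E1.
have [hn2 hs2 hd2 hdv2 hr2] := hstar_props n0 c0 E2.
have dh1 : hstar h1 %| 'X^n - (pi1 thetainv)%:P by rewrite pi1ti.
have dh2 : hstar h2 %| 'X^n - (pi0 thetainv)%:P by rewrite pi0ti.
have HCm c : c \in C <-> g1 %| vpoly (map_mx (@pi1 p) c) /\ g2 %| vpoly (map_mx (@pi0 p) c).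
  rewrite -mvp1 -mvp0; split.
  - by move/HC/(idealA _ dg1 dg2).
  - by move/(idealA _ dg1 dg2)/HC.
have HD c : c \in dualcode C <->
  (forall w, g1 %| vpoly w -> dot (map_mx (@pi1 p) c) w = 0) /\
  (forall w, g2 %| vpoly w -> dot (map_mx (@pi0 p) c) w = 0).
  rewrite /dualcode inE; split.
  - move/forallP => H; split => w Hw.
    + pose d := \row_i (MkRv 0 (w 0 i) : Rv p).
      have e1 : map_mx (@pi1 p) d = w by apply/rowP => i; rewrite !mxE /pi1 /= add0r.
      have e0 : map_mx (@pi0 p) d = 0 by apply/rowP => i; rewrite !mxE.
      have dC : d \in C by apply/HCm; rewrite e1 e0 vpoly0 dvdp0.
      have := H d; rewrite dC /= => /eqP /(congr1 (@pi1 p)).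
      by rewrite pidot1 e1 rmorph0.
    + pose d := \row_i (MkRv (w 0 i) (- w 0 i) : Rv p).
      have e1 : map_mx (@pi1 p) d = 0 by apply/rowP => i; rewrite !mxE /pi1 /= subrr.
      have e0 : map_mx (@pi0 p) d = w by apply/rowP => i; rewrite !mxE.
      have dC : d \in C by apply/HCm; rewrite e1 e0 vpoly0 dvdp0.
      have := H d; rewrite dC /= => /eqP /(congr1 (@pi0 p)).
      by rewrite pidot0 e0 rmorph0.
  - case=> A B; apply/forallP => d; apply/implyP => /HCm [d1 d0]; apply/eqP.
    by apply/zero_iff; rewrite pidot1 pidot0; split; [apply: B | apply: A].
have HD2 c : c \in dualcode C <->
  hstar h1 %| vpoly (map_mx (@pi1 p) c) /\ hstar h2 %| vpoly (map_mx (@pi0 p) c).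
  rewrite HD hr1 hr2 -(dual_char _ n0 c1 E1) -(dual_char _ n0 c0 E2).
  by [].
have HD3 c : c \in dualcode C <->
  hstar h1 %| map_poly (@pi1 p) (vpoly c) /\ hstar h2 %| map_poly (@pi0 p) (vpoly c).
  by rewrite mvp1 mvp0 HD2.
split.
- split.
  + by move=> c; rewrite HD3 (idealA _ dh1 dh2).
  + pose f (c : 'rV[Rv p]_n) := (map_mx (@pi1 p) c, map_mx (@pi0 p) c).
    have finj : injective f.
      move=> c c'; rewrite /f => -[e1 e0]; apply/rowP => i.
      have := congr1 (fun M : 'rV['F_p]_n => M 0 i) e1; have := congr1 (fun M : 'rV['F_p]_n => M 0 i) e0.
      rewrite !mxE /pi1 /pi0 /= => r0 r1; apply: Rv_eq => //.
      by move: r1; rewrite r0 => /addrI.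
    pose S1 := [set u : 'rV['F_p]_n | hstar h1 %| vpoly u].
    pose S0 := [set u : 'rV['F_p]_n | hstar h2 %| vpoly u].
    have Eim : f @: dualcode C = setX S1 S0.
      apply/setP => -[a b]; rewrite !inE /=; apply/imsetP/andP.
      - by case=> c /HD2 [Ha Hb] [-> ->]; split.
      - case=> Ha Hb; pose c := \row_i (MkRv (b 0 i) (a 0 i - b 0 i) : Rv p).
        have e1 : map_mx (@pi1 p) c = a by apply/rowP => i; rewrite !mxE /pi1 /= addrC subrK.
        have e0 : map_mx (@pi0 p) c = b by apply/rowP => i; rewrite !mxE.
        exists c; last by rewrite /f e1 e0.
        by apply/HD2; rewrite e1 e0.
    have sh1 := size_h_le n0 c1 E1; have sh2 := size_h_le n0 c0 E2.
    rewrite -(card_imset _ finj) Eim cardsX /S1 /S0 !card_div ?hs1 ?hs2 ?hd1 ?hd2 ?card_Fp //.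
    by rewrite -expnD.
- by move=> c; rewrite HD3 (idealA1 _ dh1 dh2).
- move=> c /HD2 [/dvdpP [a Ea] /dvdpP [b Eb]].
  have /dvdpP [K1 EK1] := hdv1.
  have /dvdpP [K2 EK2] := hdv2.
  have HK2 : hstar h2 * K2 = 'X^n - (lam^-1)%:P by rewrite mulrC EK2.
  have HK1 : hstar h1 * K1 = 'X^n - ((lam + mu)^-1)%:P by rewrite mulrC EK1.
  have [a1 [q1 e1]] := gray_aux (hstar h1) c0 HK2.
  have [a2 [q2 e2]] := gray_aux (hstar h2) c1 HK1.
  set S := vpoly (map_mx (@pi1 p) c) in Ea; set Rr := vpoly (map_mx (@pi0 p) c) in Eb.
  have Er : \sum_(i < n) rp (c 0 i) *: 'X^i = Rr.
    by rewrite /Rr /vpoly; apply: eq_bigr => i _; rewrite mxE.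
  have EQq : \sum_(i < n) vp (c 0 i) *: 'X^i = S - Rr.
    rewrite /S /Rr /vpoly -sumrB; apply: eq_bigr => i _.
    by rewrite !mxE -scalerBl /pi1 /pi0 addrAC subrr add0r.
  have GE : gray lam mu c =
    (lam * (lam + mu)) *: (S - Rr) + 'X^n * (- (mu *: Rr) - (lam + mu) *: (S - Rr)).
    by rewrite /gray Er EQq.
  exists (fun _ => - (lam + mu)%:P * a * a1 + lam%:P * b * a2).
  exists (- (lam + mu)%:P * a * q1 + lam%:P * b * q2).
  rewrite !big_ord_recl big_ord0 /= GE Ea Eb.
  have -> : (lam * (lam + mu)) *: (a * hstar h1 - b * hstar h2) +
     'X^n * (- (mu *: (b * hstar h2)) - (lam + mu) *: (a * hstar h1 - b * hstar h2)) =
     (- (lam + mu)%:P * a) * (hstar h1 * ('X^n - lam%:P)) +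
     (lam%:P * b) * (hstar h2 * ('X^n - (lam + mu)%:P)).
    by rewrite -!mul_polyC polyCM !polyCD; ring.
  rewrite e1 e2; ring.
Qed.
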